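(* Suppose $\mathbf t\in\Sigma^\circ$ and let $\mathbf x\in(\Sigma^* )^\circ$ satisfy \[ \mathbf t^T\left(\mathbf x\mathbf x^T-(\nu-1)H(\mathbf x)^{-1}\right)\mathbf t\ \ge\ 0. \] Then $\mathbf x\in\mathcal C(\mathbf t)$, equivalently $\mathbf t\in\mathcal P(\mathbf x)$. In particular, if $\mathbf s=-g(\mathbf x)$ for some $\mathbf x\in(\Sigma^* )^\circ$, then $\mathbf x$ is a dual certificate (i.e. $H(\mathbf x)^{-1}\mathbf t\in\Sigma^*$) for every polynomial $\mathbf t$ satisfying $\|\mathbf t-\mathbf s\|^*_{\mathbf x}\le 1$.
   Context: Fix nonzero real polynomials $g_1,\dots,g_m$ in $n$ variables and nonnegative integers $d_1,\dots,d_m$. Let $\mathcal V$ be the real vector space of polynomials $\sum_{i=1}^m g_i r_i$ with $\deg r_i\le 2d_i$, and $\Sigma\subseteq\mathcal V$ the cone of weighted sums of squares $\sum_i g_i\sigma_i$ with each $\sigma_i$ a sum of squares of polynomials of degree at most $d_i$; assume $\Sigma$ is a proper cone. Fix a basis $\mathbf q=(q_1,\dots,q_U)$ of $\mathcal V$, identify $\mathcal V$ and its dual with $\mathbb R^U$ with the standard inner product and Euclidean norm $\|\cdot\|$; $\Sigma^*$ is the dual cone, $K^\circ$ the interior of $K$. For each $i$ fix a basis $\mathbf p_i$ (of size $L_i$) of polynomials of degree at most $d_i$ and let $\Lambda_i:\mathbb R^U\to\mathbb S^{L_i}$ be the unique linear map with $\sum_u q_u\Lambda_i(\mathbf e_u)=g_i\mathbf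 p_i\mathbf p_i^T$; $\Lambda=\Lambda_1\oplus\cdots\oplus\Lambda_m$ (block diagonal), $\Lambda^*$ its adjoint. Then $(\Sigma^* )^\circ=\{\mathbf x:\Lambda(\mathbf x)\succ0\}$ and $\Sigma^*=\{\mathbf x:\Lambda(\mathbf x)\succeq0\}$. On $(\Sigma^* )^\circ$ let $f(\mathbf x)=-\ln\det\Lambda(\mathbf x)$, with gradient $g(\mathbf x)=-\Lambda^*(\Lambda(\mathbf x)^{-1})$ (not to be confused with the weights $g_i$) and Hessian $H(\mathbf x)\mathbf w=\Lambda^*(\Lambda(\mathbf x)^{-1}\Lambda(\mathbf w)\Lambda(\mathbf x)^{-1})$, positive definite. Let $\nu=\sum_i L_i$. The dual local norm is $\|\mathbf s\|^*_{\mathbf x}=\|H(\mathbf x)^{-1/2}\mathbf s\|$. For $\mathbf s\in\Sigma$, $\mathcal C(\mathbf s)=\{\mathbf x\in(\Sigma^* )^\circ: H(\mathbf x)^{-1}\mathbf s\in\Sigma^*\}$ (the dual certificates of $\mathbf s$), and for $\mathbf x\in(\Sigma^* )^\circ$, $\mathcal P(\mathbf x)=\{\mathbf s\in\Sigma: H(\mathbf x)^{-1}\mathbf s\in\Sigma^*\}$. *)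

(* Defs.v *)
From HB Require Import structures.
From mathcomp Require Import all_boot all_order all_algebra.
From mathcomp Require Import mpoly.
Set Implicit Arguments. Unset Strict Implicit. Unset Printing Implicit Defensive.
Import Order.TTheory GRing.Theory Num.Theory.
Local Open Scope ring_scope.

(* total degree at most k  (msize p = 1 + deg p, and msize 0 = 0) *)
Definition deg_le (R : nzRingType) (n : nat) (p : {mpoly R[n]}) (k : nat) : bool :=
  (msize p <= k.+1)%N.

Definition sos_deg (R : nzRingType) (n : nat) (d : nat) (sigma : {mpoly R[n]}) : Prop :=
  exists s : seq {mpoly R[n]},
    all (fun h => deg_le h d) s /\ sigma = \sum_(h <- s) h ^+ 2.

Definition poly_of (R : nzRingType) (n U : nat) (q : 'I_U -> {mpoly R[n]})
  (t : 'cV[R]_U) : {mpoly R[n]} := \sum_(u < U) t u 0 *: q u.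

Definition in_V (R : nzRingType) (n m : nat) (g : 'I_m -> {mpoly R[n]})
  (d : 'I_m -> nat) (f : {mpoly R[n]}) : Prop :=
  exists r : 'I_m -> {mpoly R[n]},
    (forall i, deg_le (r i) (2 * d i)) /\ f = \sum_(i < m) g i * r i.

Definition is_basis_V (R : nzRingType) (n m U : nat) (g : 'I_m -> {mpoly R[n]})
  (d : 'I_m -> nat) (q : 'I_U -> {mpoly R[n]}) : Prop :=
  [/\ forall u, in_V g d (q u),
      forall t : 'cV[R]_U, poly_of q t = 0 -> t = 0
    & forall f, in_V g d f -> exists t : 'cV[R]_U, poly_of q t = f].

Definition is_basis_deg (R : nzRingType) (n k L : nat) (p : 'I_L -> {mpoly R[n]}) : Prop :=
  [/\ forall j, deg_le (p j) k,
      forall c : 'I_L -> R, \sum_(j < L) c j *: p j = 0 -> forall j, c j = 0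
    & forall f : {mpoly R[n]}, deg_le f k ->
        exists c : 'I_L -> R, f = \sum_(j < L) c j *: p j].

(* Sigma, in coordinates w.r.t. q: weighted sums of squares sum_i g_i sigma_i *)
Definition SigmaC (R : nzRingType) (n m U : nat) (g : 'I_m -> {mpoly R[n]})
  (d : 'I_m -> nat) (q : 'I_U -> {mpoly R[n]}) (t : 'cV[R]_U) : Prop :=
  exists sigma : 'I_m -> {mpoly R[n]},
    (forall i, sos_deg (d i) (sigma i)) /\ poly_of q t = \sum_(i < m) g i * sigma i.

Definition dotU (R : nzRingType) (U : nat) (x y : 'cV[R]_U) : R :=
  \sum_(u < U) x u 0 * y u 0.

Definition dual_cone (R : numDomainType) (U : nat) (K : 'cV[R]_U -> Prop)
  (y : 'cV[R]_U) : Prop := forall s, K s -> 0 <= dotU y s.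

Definition dist2 (R : nzRingType) (U : nat) (x y : 'cV[R]_U) : R :=
  \sum_(u < U) (x u 0 - y u 0) ^+ 2.

Definition interior (R : numDomainType) (U : nat) (K : 'cV[R]_U -> Prop)
  (y : 'cV[R]_U) : Prop :=
  exists2 e : R, 0 < e & forall z, dist2 z y < e ^+ 2 -> K z.

Definition closed_set (R : numDomainType) (U : nat) (K : 'cV[R]_U -> Prop) : Prop :=
  forall y, (forall e : R, 0 < e -> exists2 z, K z & dist2 z y < e ^+ 2) -> K y.

Definition convex_cone (R : numDomainType) (U : nat) (K : 'cV[R]_U -> Prop) : Prop :=
  K 0 /\ (forall a b : R, forall x y, 0 <= a -> 0 <= b -> K x -> K y -> K (a *: x + b *: y)).

Definition proper_cone (R : numDomainType) (U : nat) (K : 'cV[R]_U -> Prop) : Prop :=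
  [/\ convex_cone K, closed_set K,
      (forall x, K x -> K (- x) -> x = 0) & exists x, interior K x].

(* Lambda_i(x) = sum_u x_u Lambda_i(e_u), where Lam i u = Lambda_i(e_u) *)
Definition LamI (R : nzRingType) (m U : nat) (L : 'I_m -> nat)
  (Lam : forall i : 'I_m, 'I_U -> 'M[R]_(L i)) (i : 'I_m) (x : 'cV[R]_U) : 'M[R]_(L i) :=
  \sum_(u < U) x u 0 *: Lam i u.

(* Lambda = Lambda_1 (+) ... (+) Lambda_m, block diagonal, of size nu = sum_i L_i *)
Definition LamB (R : nzRingType) (m U : nat) (L : 'I_m -> nat)
  (Lam : forall i : 'I_m, 'I_U -> 'M[R]_(L i)) (x : 'cV[R]_U) : 'M[R]_(\sum_(i < m) L i) :=
  \mxdiag_(i < m) LamI Lam i x.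

Definition delta (R : nzRingType) (U : nat) (u : 'I_U) : 'cV[R]_U := \col_(v < U) (u == v)%:R.

(* adjoint Lambda^* w.r.t. the trace inner product <A,B> = tr(A^T B) *)
Definition LamAdj (R : nzRingType) (m U : nat) (L : 'I_m -> nat)
  (Lam : forall i : 'I_m, 'I_U -> 'M[R]_(L i)) (S : 'M[R]_(\sum_(i < m) L i)) : 'cV[R]_U :=
  \col_(u < U) \tr ((LamB Lam (delta _ u))^T *m S).

(* gradient g(x) = - Lambda^*(Lambda(x)^{-1}) of f = -ln det Lambda *)
Definition grad (R : comUnitRingType) (m U : nat) (L : 'I_m -> nat)
  (Lam : forall i : 'I_m, 'I_U -> 'M[R]_(L i)) (x : 'cV[R]_U) : 'cV[R]_U :=
  - LamAdj Lam (invmx (LamB Lam x)).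

Definition hess (R : comUnitRingType) (m U : nat) (L : 'I_m -> nat)
  (Lam : forall i : 'I_m, 'I_U -> 'M[R]_(L i)) (x : 'cV[R]_U) : 'M[R]_U :=
  \matrix_(u < U, v < U)
    LamAdj Lam (invmx (LamB Lam x) *m LamB Lam (delta _ v) *m invmx (LamB Lam x)) u 0.

Definition dual_norm (R : rcfType) (m U : nat) (L : 'I_m -> nat)
  (Lam : forall i : 'I_m, 'I_U -> 'M[R]_(L i)) (x s : 'cV[R]_U) : R :=
  Num.sqrt ((s^T *m invmx (hess Lam x) *m s) 0 0).

Definition certC (R : rcfType) (n m U : nat) (g : 'I_m -> {mpoly R[n]})
  (d : 'I_m -> nat) (q : 'I_U -> {mpoly R[n]}) (L : 'I_m -> nat)
  (Lam : forall i : 'I_m, 'I_U -> 'M[R]_(L i)) (s x : 'cV[R]_U) : Prop :=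
  interior (dual_cone (SigmaC g d q)) x /\
  dual_cone (SigmaC g d q) (invmx (hess Lam x) *m s).

Definition primP (R : rcfType) (n m U : nat) (g : 'I_m -> {mpoly R[n]})
  (d : 'I_m -> nat) (q : 'I_U -> {mpoly R[n]}) (L : 'I_m -> nat)
  (Lam : forall i : 'I_m, 'I_U -> 'M[R]_(L i)) (x s : 'cV[R]_U) : Prop :=
  SigmaC g d q s /\ dual_cone (SigmaC g d q) (invmx (hess Lam x) *m s).

(* Main.v *)
Require Import Defs.
From HB Require Import structures.
From mathcomp Require Import all_boot all_order all_algebra.
From mathcomp Require Import mpoly.
From mathcomp Require Import ring lra.
Set Implicit Arguments. Unset Strict Implicit. Unset Printing Implicit Defensive.
Import Order.TTheory GRing.Theory Num.Theory.
Local Open Scope ring_scope.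
Section Chol.
Variable R : rcfType.

Definition qf n (A : 'M[R]_n) (v : 'cV[R]_n) : R := (v^T *m A *m v) 0 0.

Lemma mul11 n (A : 'M[R]_(1,1)) (B : 'M[R]_(1,n)) j : (A *m B) 0 j = A 0 0 * B 0 j.
Proof. by rewrite mxE big_ord1. Qed.

Lemma qf_block n (a : 'M[R]_1) (b : 'M[R]_(1,n)) (D : 'M[R]_n) (u1 : 'M[R]_1) (u2 : 'cV[R]_n) :
  qf (block_mx a b b^T D) (col_mx u1 u2) =
  u1 0 0 * a 0 0 * u1 0 0 + 2 * u1 0 0 * (b *m u2) 0 0 + qf D u2.
Proof.
rewrite /qf tr_col_mx mul_row_block mul_row_col !mulmxDl !mxE.
rewrite !big_ord1 !mxE !big_ord1.
have e1 : \sum_j u2^T 0 j * b^T j 0 = (b *m u2) 0 0.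
  by rewrite mxE; apply eq_bigr => j _; rewrite !mxE mulrC.
have e2 : \sum_j (u1^T *m b) 0 j * u2 j 0 = u1 0 0 * (b *m u2) 0 0.
  by rewrite mxE mulr_sumr; apply eq_bigr => j _; rewrite mul11 !mxE mulrA.
rewrite e1 e2 !mxE.
ring.
Qed.

Definition pdmx n (W : 'M[R]_n) := forall v : 'cV[R]_n, v != 0 -> 0 < qf W v.

Lemma chol n (W : 'M[R]_n) : W^T = W -> pdmx W -> exists C : 'M[R]_n, W = C^T *m C.
Proof.
elim: n W => [|n IH] W symW pdW.
  by exists 0; apply/matrixP => i; case: i.
move: W symW pdW.
change (forall W : 'M[R]_(1 + n), W^T = W -> pdmx W -> exists C : 'M[R]_(1 + n), W = C^T *m C).
move=> W symW pdW.
have [a [b [c [D EW]]]] : exists a b c D, W = @block_mx R 1 n 1 n a b c D.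
  by exists (ulsubmx W), (ursubmx W), (dlsubmx W), (drsubmx W); rewrite submxK.
subst W.
move: symW; rewrite tr_block_mx => /eq_block_mx [_ _ Ec ED].
subst c.
have qbb (u : 'cV[R]_n) : qf (b^T *m b) u = (b *m u) 0 0 ^+ 2.
  rewrite /qf mulmxA -trmx_mul -mulmxA mxE big_ord1 mxE.
  by rewrite expr2 !mxE.
set al := a 0 0.
have al_gt0 : 0 < al.
  have := pdW (col_mx 1 0); rewrite qf_block.
  rewrite col_mx_eq0 oner_eq0 /= mulmx0 /qf !mulmx0 !mxE mul1r mulr1 mulr0 !addr0.
  by apply.
pose S := D - al^-1 *: (b^T *m b).
have symS : S^T = S by rewrite /S linearB /= linearZ /= trmx_mul trmxK ED.
have pdS : pdmx S.
  move=> u u0.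
  pose be := (b *m u) 0 0.
  have := pdW (col_mx (- (be / al))%:M u); rewrite qf_block.
  rewrite col_mx_eq0 (negbTE u0) andbF => /(_ isT).
  have -> : qf S u = qf D u - al^-1 * be ^+ 2.
    have := qbb u; rewrite /qf => Eq.
    rewrite mulmxBr mulmxBl -scalemxAr -scalemxAl.
    by rewrite [X in X = _]mxE [X in _ + X = _]mxE [X in _ - X = _]mxE Eq.
  rewrite !mxE /= mulr1n.
  have alN0 : al != 0 by rewrite gt_eqF.
  have Ebe : \sum_(j < n) b 0 j * u j 0 = be by rewrite /be mxE.
  rewrite -/al Ebe.
  suff -> : - (be / al) * al * - (be / al) + 2 * - (be / al) * be + qf D u = qf D u - al^-1 * be ^+ 2 by [].
  by field.
have [C' EC'] := IH S symS pdS.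
pose s := Num.sqrt al.
have s_gt0 : 0 < s by rewrite sqrtr_gt0.
have sN0 : s != 0 by rewrite gt_eqF.
exists (block_mx s%:M (s^-1 *: b) 0 C').
rewrite tr_block_mx mulmx_block !trmx0 !mulmx0 !mul0mx !addr0 tr_scalar_mx.
rewrite -EC' /S.
have ss : s * s = al by rewrite -expr2 sqr_sqrtr ?ltW.
congr block_mx.
- by rewrite [LHS]mx11_scalar -scalar_mxM ss.
- by rewrite mul_scalar_mx scalerA mulfV // scale1r.
- by rewrite mul_mx_scalar [(s^-1 *: b)^T]linearZ scalerA mulfV // scale1r.
- rewrite [(s^-1 *: b)^T]linearZ -scalemxAl -scalemxAr scalerA -invfM ss.
  by rewrite addrC subrK.
Qed.

Definition psdmx n (W : 'M[R]_n) := forall v : 'cV[R]_n, 0 <= qf W v.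

Lemma pd_unit n (X : 'M[R]_n) : pdmx X -> X \in unitmx.
Proof.
move=> pdX; rewrite unitmxE unitfE; apply/negP => /det0P [v v0 vX].
have := pdX v^T; rewrite trmx_eq0 v0 /qf trmxK vX mul0mx mxE ltxx.
by move/(_ isT).
Qed.

Lemma tr_sq m kk (S : 'M[R]_(m,kk)) : \tr (S *m S^T) = \sum_i \sum_j S i j ^+ 2.
Proof.
rewrite /mxtrace; apply eq_bigr => i _; rewrite mxE; apply eq_bigr => j _.
by rewrite mxE expr2.
Qed.

Lemma tr_sq_ge0 m kk (S : 'M[R]_(m,kk)) : 0 <= \tr (S *m S^T).
Proof. by rewrite tr_sq; apply sumr_ge0 => i _; apply sumr_ge0 => j _; apply sqr_ge0. Qed.

Lemma tr_sq_eq0 m kk (S : 'M[R]_(m,kk)) : \tr (S *m S^T) = 0 -> S = 0.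
Proof.
rewrite tr_sq => /eqP; rewrite psumr_eq0 => [/allP H|i _]; last first.
  by apply sumr_ge0 => j _; apply sqr_ge0.
apply/matrixP => i j; rewrite mxE.
have /implyP /(_ isT) := H i (mem_index_enum _).
rewrite psumr_eq0 => [/allP H2|k _]; last by apply sqr_ge0.
by have /implyP /(_ isT) := H2 j (mem_index_enum _); rewrite sqrf_eq0 => /eqP.
Qed.

Lemma quad_disc (P Q T : R) : 0 <= T -> (forall l, 0 <= P - 2 * l * Q + l ^+ 2 * T) -> Q ^+ 2 <= P * T.
Proof.
move=> T0 H; have [Tp|] := ltP 0 T.
  have := H (Q / T).
  have E : P - 2 * (Q / T) * Q + (Q / T) ^+ 2 * T = (P * T - Q ^+ 2) / T.
    by field; rewrite gt_eqF.
  rewrite E => H'; have := mulr_ge0 H' (ltW Tp).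
  by rewrite divfK ?gt_eqF // subr_ge0.
move=> TT; have T00 : T = 0 by apply/le_anti; rewrite TT T0.
have [Q0|QN0] := eqVneq Q 0; first by rewrite Q0 T00 expr0n /= mulr0.
have := H ((P + 1) / (2 * Q)); rewrite T00 mulr0 addr0.
have -> : 2 * ((P + 1) / (2 * Q)) * Q = P + 1.
  by field.
by move=> HH; exfalso; lra.
Qed.

Lemma realA (r d p : R) : 0 < r -> r + d < 0 -> d ^+ 2 <= p * r ^+ 2 -> p <= 1 -> False.
Proof.
move=> r0 Hn H Hp.
have h1 : p * r ^+ 2 <= 1 * r ^+ 2 by apply: ler_wpM2r; [apply: sqr_ge0 | exact Hp].
nra.
Qed.

Lemma realB (a b m r k : R) : 0 < r -> m < 0 -> 0 <= a -> 0 <= k -> k * b <= a ^+ 2 ->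
  (a - m / r) ^+ 2 <= (b - (m / r) ^+ 2) * k -> False.
Proof.
move=> r0 m0 a0 k0 H1 H2.
have mu0 : m / r < 0 by rewrite pmulr_llt0 ?invr_gt0.
move: H2; set mu := m / r => H2.
have h3 : 0 <= k * mu ^+ 2 by apply: mulr_ge0 => //; apply: sqr_ge0.
have h4 : 0 <= a * (- mu) by apply: mulr_ge0 => //; rewrite oppr_ge0 ltW.
have h5 : 0 < mu ^+ 2 by rewrite exprn_even_gt0 //= lt_eqF.
nra.
Qed.

Section IP.
Variables (n : nat) (X : 'M[R]_n).
Hypotheses (symX : X^T = X) (pdX : pdmx X).
Let Xi := invmx X.
Let Xu : X \in unitmx := pd_unit pdX.

Lemma symXi : Xi^T = Xi.
Proof. by rewrite /Xi trmx_inv symX. Qed.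

Lemma pdXi : pdmx Xi.
Proof.
move=> v v0; have := @pdX (Xi *m v).
have -> : qf X (Xi *m v) = qf Xi v.
  by rewrite /qf trmx_mul symXi -!mulmxA (mulmxA X) mulmxV // mul1mx.
apply; apply/negP => /eqP H; move/negP: v0; apply; apply/eqP.
by rewrite -(mulKVmx Xu v) -/Xi H mulmx0.
Qed.

Definition ip (A B : 'M[R]_n) := \tr (A *m Xi *m B *m Xi).

Lemma ipC A B : ip A B = ip B A.
Proof. by rewrite /ip -mulmxA mxtrace_mulC !mulmxA. Qed.

Lemma ipDl A B C : ip (A + B) C = ip A C + ip B C.
Proof. by rewrite /ip !mulmxDl mxtraceD. Qed.

Lemma ipNl A C : ip (- A) C = - ip A C.
Proof. by rewrite /ip !mulNmx linearN. Qed.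

Lemma ipZl a A C : ip (a *: A) C = a * ip A C.
Proof. by rewrite /ip -!scalemxAl mxtraceZ. Qed.

Lemma ipBl A B C : ip (A - B) C = ip A C - ip B C.
Proof. by rewrite ipDl ipNl. Qed.

Lemma ipDr A B C : ip C (A + B) = ip C A + ip C B.
Proof. by rewrite ipC ipDl ipC (ipC B). Qed.
Lemma ipBr A B C : ip C (A - B) = ip C A - ip C B.
Proof. by rewrite ipC ipBl ipC (ipC B). Qed.
Lemma ipZr a A C : ip C (a *: A) = a * ip C A.
Proof. by rewrite ipC ipZl ipC. Qed.

Lemma ip_ge0_eq0 A : A^T = A -> 0 <= ip A A /\ (ip A A = 0 -> A = 0).
Proof.
move=> symA; have [C EC] := chol symXi pdXi.
have E : ip A A = \tr ((C *m A *m C^T) *m (C *m A *m C^T)^T).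
  rewrite /ip -/Xi EC !trmx_mul trmxK symA !mulmxA.
  by rewrite mxtrace_mulC !mulmxA.
rewrite E; split; first exact: tr_sq_ge0.
move/tr_sq_eq0 => H.
have Cu : C \in unitmx.
  have : Xi \in unitmx by rewrite /Xi unitmx_inv.
  by rewrite EC !unitmxE det_mulmx det_tr unitrM => /andP [].
have CTu : C^T \in unitmx by rewrite unitmx_tr.
by rewrite -(mulKmx Cu A) -(mulmxK CTu (C *m A)) H mul0mx mulmx0.
Qed.

Lemma cs A B : A^T = A -> B^T = B -> ip A B ^+ 2 <= ip A A * ip B B.
Proof.
move=> sA sB; apply quad_disc; first by case: (ip_ge0_eq0 sB).
move=> l; have sAB : (A - l *: B)^T = A - l *: B.
  by rewrite linearB /= linearZ /= sA sB.
have [H _] := ip_ge0_eq0 sAB.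
suff <- : ip (A - l *: B) (A - l *: B) = ip A A - 2 * l * ip A B + l ^+ 2 * ip B B by [].
rewrite !ipBl !ipBr !ipZl !ipZr (ipC B A); ring.
Qed.


Lemma tr11 (A : 'M[R]_1) : \tr A = A 0 0.
Proof. by rewrite /mxtrace big_ord1. Qed.

Lemma ipN (v : 'cV[R]_n) M : ip M (X *m v *m v^T *m X) = qf M v.
Proof.
rewrite /ip /qf -/Xi !mulmxA mulmxKV // -!mulmxA mulmxV // mulmx1.
by rewrite mulmxA mxtrace_mulC mulmxA tr11.
Qed.

Lemma ipX M : ip X M = \tr (M *m Xi).
Proof. by rewrite /ip mulmxV // mul1mx. Qed.

Lemma ipXX : ip X X = n%:R.
Proof. by rewrite ipX mulmxV // mxtrace1. Qed.

Lemma symN (v : 'cV[R]_n) : (X *m v *m v^T *m X)^T = X *m v *m v^T *m X.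
Proof. by rewrite !trmx_mul trmxK symX !mulmxA. Qed.

Lemma qf0 (M : 'M[R]_n) : qf M 0 = 0.
Proof. by rewrite /qf mulmx0 mxE. Qed.

Lemma keyA (D : 'M[R]_n) : D^T = D -> ip D D <= 1 -> psdmx (X + D).
Proof.
move=> sD HD v; rewrite leNgt; apply/negP => Hneg.
have v0 : v != 0 by apply/negP => /eqP v0; move: Hneg; rewrite v0 qf0 ltxx.
have r0 := @pdX v v0.
have := cs sD (symN v); rewrite !ipN.
move: Hneg.
have -> : qf (X + D) v = qf X v + qf D v by rewrite /qf mulmxDr mulmxDl mxE.
move=> Hneg.
have -> : qf (X *m v *m v^T *m X) v = qf X v ^+ 2.
  rewrite /qf.
  have -> : v^T *m (X *m v *m v^T *m X) *m v = (v^T *m X *m v) *m (v^T *m X *m v) by rewrite !mulmxA.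
  by rewrite mul11 expr2.
by move=> H; apply: (realA r0 Hneg H HD).
Qed.

Lemma keyB (Y : 'M[R]_n) : Y^T = Y -> 0 <= \tr (Y *m Xi) ->
  (n%:R - 1) * ip Y Y <= \tr (Y *m Xi) ^+ 2 -> psdmx Y.
Proof.
move=> sY Ha Hb v; rewrite leNgt; apply/negP => Hneg.
have v0 : v != 0 by apply/negP => /eqP v0; move: Hneg; rewrite v0 qf0 ltxx.
have n1 : 1 <= n%:R :> R.
  rewrite ler1n lt0n; apply/negP => /eqP n0; move/negP: v0; apply.
  by apply/eqP/matrixP => i; exfalso; have := ltn_ord i; rewrite {2}n0.
have r0 := @pdX v v0.
set r := qf X v in r0; set m := qf Y v in Hneg; set a := \tr (Y *m Xi) in Ha Hb.
set N := r^-1 *: (X *m v *m v^T *m X).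
have sN : N^T = N by rewrite /N linearZ /= symN.
have sA : (Y - (m / r) *: N)^T = Y - (m / r) *: N by rewrite linearB /= linearZ /= sY sN.
have sB : (X - N)^T = X - N by rewrite linearB /= sN symX.
have := cs sA sB.
have E1 : ip Y N = m / r by rewrite /N ipZr ipN mulrC.
have E2 : ip N N = 1.
  rewrite /N ipZr ipZl ipN.
  have -> : qf (X *m v *m v^T *m X) v = r ^+ 2.
    rewrite /qf.
    have -> : v^T *m (X *m v *m v^T *m X) *m v = (v^T *m X *m v) *m (v^T *m X *m v) by rewrite !mulmxA.
    by rewrite mul11 expr2.
  by field; rewrite gt_eqF.
have E3 : ip X N = 1 by rewrite /N ipZr ipN -/r mulVf // gt_eqF.
have E4 : ip Y X = a by rewrite ipC ipX.
rewrite !ipBl !ipBr !ipZl !ipZr.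
have F1 : ip Y (X *m v *m v^T *m X) = m by rewrite ipN.
have F2 : ip (X *m v *m v^T *m X) Y = m by rewrite ipC ipN.
have F3 : ip X (X *m v *m v^T *m X) = r by rewrite ipN.
have F4 : ip (X *m v *m v^T *m X) X = r by rewrite ipC ipN.
have F5 : ip (X *m v *m v^T *m X) (X *m v *m v^T *m X) = r ^+ 2.
  rewrite ipN /qf.
  have -> : v^T *m (X *m v *m v^T *m X) *m v = (v^T *m X *m v) *m (v^T *m X *m v) by rewrite !mulmxA.
  by rewrite mul11 expr2.
rewrite F1 F2 F3 F4 F5 ipXX E4.
have rN0 : r != 0 by rewrite gt_eqF.
move=> H; apply: (realB r0 Hneg Ha _ Hb); first by rewrite subr_ge0.
apply: (le_trans _ (le_trans H _)); rewrite le_eqVlt; apply/orP; left; apply/eqP; field=> //.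
Qed.

End IP.
End Chol.
Set Implicit Arguments. Unset Strict Implicit. Unset Printing Implicit Defensive.
Import Order.TTheory GRing.Theory Num.Theory.
Local Open Scope ring_scope.
Section Blocks.
Variables (R : rcfType) (p : nat) (p_ : 'I_p -> nat).

Lemma mxdiagZ' (a : R) (B : forall i, 'M[R]_(p_ i)) :
  \mxdiag_i (a *: B i) = a *: \mxdiag_i B i.
Proof.
apply/mxblockP => i j.
have -> : forall M : 'M[R]_(\sum_i p_ i), submxblock (a *: M) i j = a *: submxblock M i j.
  by move=> M; apply/matrixP => k l; rewrite !mxE.
by rewrite !mxblockK; case: eqVneq => [->|]; rewrite ?conform_mx_id // ?scaler0.
Qed.

Lemma qf_mxdiag (B : forall i, 'M[R]_(p_ i)) (v : 'cV[R]_(\sum_i p_ i)) :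
  qf (\mxdiag_i B i) v = \sum_i qf (B i) (submxcol v i).
Proof.
rewrite /qf -{1 2}(submxcolK v) tr_mxcol -mulmxA mul_mxdiag_mxcol mul_mxrow_mxcol summxE.
by apply eq_bigr => i _; rewrite mulmxA.
Qed.

Definition embed i (c : 'cV[R]_(p_ i)) : 'cV[R]_(\sum_i p_ i) :=
  \mxcol_j (if j == i then conform_mx 0 c else 0).

Lemma qf_embed (B : forall i, 'M[R]_(p_ i)) i (c : 'cV[R]_(p_ i)) :
  qf (\mxdiag_j B j) (embed c) = qf (B i) c.
Proof.
rewrite qf_mxdiag (bigD1 i) //= big1 ?addr0.
  by rewrite mxcolK eqxx conform_mx_id.
move=> j ji; rewrite mxcolK (negbTE ji) /qf mulmx0 mxE //.
Qed.

Lemma submxcol_eq0 (v : 'cV[R]_(\sum_i p_ i)) : (forall i, submxcol v i = 0) -> v = 0.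
Proof.
move=> H; rewrite -(submxcolK v); under eq_mxcol do rewrite H; exact: mxcol0.
Qed.
End Blocks.

Unset Implicit Arguments.
Section Main.
Variables (R : rcfType) (n m U : nat)
  (g : 'I_m -> {mpoly R[n]}) (d : 'I_m -> nat) (q : 'I_U -> {mpoly R[n]})
  (L : 'I_m -> nat) (p : forall i : 'I_m, 'I_(L i) -> {mpoly R[n]})
  (Lam : forall i : 'I_m, 'I_U -> 'M[R]_(L i)).
Hypotheses (hg : forall i, g i != 0) (hq : is_basis_V g d q)
  (hp : forall i, is_basis_deg (d i) (p i))
  (hLam : forall i (j k : 'I_(L i)), \sum_(u < U) (Lam i u) j k *: q u = g i * (p i j * p i k))
  (hcone : proper_cone (SigmaC g d q)).

Local Notation LB u := (LamB Lam (delta R u)).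

Lemma poly_ofD (s t : 'cV[R]_U) : poly_of q (s + t) = poly_of q s + poly_of q t.
Proof. by rewrite /poly_of -big_split; apply eq_bigr => u _; rewrite mxE scalerDl. Qed.
Lemma poly_ofB (s t : 'cV[R]_U) : poly_of q (s - t) = poly_of q s - poly_of q t.
Proof. by rewrite /poly_of -sumrB; apply eq_bigr => u _; rewrite !mxE scalerBl. Qed.
Lemma poly_of0 : poly_of q 0 = 0.
Proof. by rewrite /poly_of big1 // => u _; rewrite mxE scale0r. Qed.
Lemma poly_of_sum (I : Type) (r : seq I) (F : I -> 'cV[R]_U) :
  poly_of q (\sum_(k <- r) F k) = \sum_(k <- r) poly_of q (F k).
Proof.
elim: r => [|a r IH]; first by rewrite !big_nil poly_of0.
by rewrite !big_cons poly_ofD IH.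
Qed.
Lemma poly_inj (s t : 'cV[R]_U) : poly_of q s = poly_of q t -> s = t.
Proof.
case: hq => _ hind _ E; apply/eqP; rewrite -subr_eq0; apply/eqP/hind.
by rewrite poly_ofB E subrr.
Qed.

Lemma LamI_delta i u : LamI Lam i (delta R u) = Lam i u.
Proof.
rewrite /LamI (bigD1 u) //= mxE eqxx scale1r big1 ?addr0 // => v vu.
by rewrite mxE eq_sym (negbTE vu) scale0r.
Qed.

Lemma LB_E u : LB u = \mxdiag_i Lam i u.
Proof. by rewrite /LamB; apply eq_mxdiag => i; rewrite LamI_delta. Qed.

Lemma LamB_lin w : LamB Lam w = \sum_u w u 0 *: LB u.
Proof.
rewrite /LamB /LamI mxdiag_sum; apply eq_bigr => u _.
rewrite mxdiagZ'; congr (_ *: _); apply eq_mxdiag => i; exact: (esym (LamI_delta i u)).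
Qed.

Lemma symLam i u : (Lam i u)^T = Lam i u.
Proof.
apply/matrixP => j k; rewrite mxE.
pose t : 'cV[R]_U := \col_u (Lam i u j k - Lam i u k j).
have : t = 0.
  case: hq => _ hind _; apply: hind.
  rewrite /poly_of.
  under eq_bigr do rewrite mxE scalerBl.
  by rewrite sumrB hLam hLam (mulrC (p i j)) subrr.
move/matrixP => /(_ u 0); rewrite !mxE => /eqP; rewrite subr_eq0 => /eqP ->.
by [].
Qed.

Lemma symLB u : (LB u)^T = LB u.
Proof. by rewrite LB_E tr_mxdiag; apply eq_mxdiag => i; rewrite symLam. Qed.

Lemma symLamB w : (LamB Lam w)^T = LamB Lam w.
Proof.
rewrite LamB_lin linear_sum /=; apply eq_bigr => u _.
by rewrite linearZ /= symLB.
Qed.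

Lemma LamB_B y x : LamB Lam (y - x) = LamB Lam y - LamB Lam x.
Proof.
rewrite !LamB_lin -sumrB; apply eq_bigr => u _; by rewrite !mxE scalerBl.
Qed.

Lemma dotUE (a b : 'cV[R]_U) : dotU a b = (a^T *m b) 0 0.
Proof. by rewrite /dotU mxE; apply eq_bigr => u _; rewrite mxE. Qed.

Lemma dotUC (a b : 'cV[R]_U) : dotU a b = dotU b a.
Proof. by rewrite /dotU; apply eq_bigr => u _; rewrite mulrC. Qed.

Lemma dotU_adj w S : dotU w (LamAdj Lam S) = \tr (LamB Lam w *m S).
Proof.
rewrite /dotU LamB_lin mulmx_suml linear_sum /=; apply eq_bigr => u _.
by rewrite mxE -scalemxAl mxtraceZ symLB.
Qed.

Lemma hessE x (w : 'cV[R]_U) :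
  hess Lam x *m w = LamAdj Lam (invmx (LamB Lam x) *m LamB Lam w *m invmx (LamB Lam x)).
Proof.
apply/matrixP => u k; rewrite (ord1 k) {1}mxE [RHS]mxE.
rewrite [LamB Lam w]LamB_lin mulmx_sumr mulmx_suml mulmx_sumr linear_sum /=.
apply eq_bigr => v _; rewrite !mxE mulrC.
by rewrite -scalemxAr -scalemxAl -scalemxAr mxtraceZ.
Qed.

Lemma dot_hess x y w : dotU w (hess Lam x *m y) = ip (LamB Lam x) (LamB Lam w) (LamB Lam y).
Proof. by rewrite hessE dotU_adj /ip !mulmxA. Qed.

Definition sv i (c : 'cV[R]_(L i)) : 'cV[R]_U := \col_u qf (Lam i u) c.
Definition hpo i (c : 'cV[R]_(L i)) : {mpoly R[n]} := \sum_j c j 0 *: p i j.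

Lemma qfE k (M : 'M[R]_k) c : qf M c = \sum_j \sum_l c j 0 * c l 0 * M j l.
Proof.
rewrite /qf mxE (exchange_big).
apply eq_bigr => l _; rewrite mxE mulr_suml; apply eq_bigr => j _.
by rewrite !mxE; ring.
Qed.

Lemma poly_sv i c : poly_of q (sv i c) = g i * hpo i c ^+ 2.
Proof.
have E : g i * hpo i c ^+ 2 = \sum_j \sum_l (c j 0 * c l 0) *: (g i * (p i j * p i l)).
  rewrite /hpo expr2 mulr_suml mulr_sumr; apply eq_bigr => j _.
  rewrite mulr_sumr mulr_sumr; apply eq_bigr => l _.
  by rewrite -scalerAl -!scalerAr !scalerA.
rewrite E /poly_of.
under eq_bigr do rewrite mxE qfE scaler_suml.
rewrite exchange_big /=; apply eq_bigr => j _.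
under eq_bigr do rewrite scaler_suml.
rewrite exchange_big /=; apply eq_bigr => l _.
under eq_bigr do rewrite -scalerA.
by rewrite -scaler_sumr hLam.
Qed.

Lemma dot_sv y i c : dotU y (sv i c) = qf (LamI Lam i y) c.
Proof.
rewrite /dotU /LamI qfE.
under eq_bigr do rewrite mxE qfE mulr_sumr.
rewrite exchange_big; apply eq_bigr => j _.
under eq_bigr do rewrite mulr_sumr.
rewrite exchange_big; apply eq_bigr => l _.
rewrite summxE mulr_sumr; apply eq_bigr => u _.
by rewrite mxE; ring.
Qed.

Lemma deg_hpo i c : deg_le (hpo i c) (d i).
Proof.
case: (hp i) => hdeg _ _.
rewrite /deg_le /hpo; apply: leq_trans (msize_sum _ _ _) _.
apply/bigmax_leqP => j _; apply: leq_trans (msizeZ_le _ _) _; exact: hdeg.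
Qed.

Lemma hpo_inj i c : hpo i c = 0 -> c = 0.
Proof.
case: (hp i) => _ hind _ H.
have := hind (fun j => c j 0) H => E.
by apply/matrixP => j k; rewrite (ord1 k) E mxE.
Qed.

Lemma sv_in i c : SigmaC g d q (sv i c).
Proof.
exists (fun j => if j == i then hpo i c ^+ 2 else 0); split.
  move=> j; case: eqVneq => [->|_].
    by exists [:: hpo i c]; rewrite /= deg_hpo big_seq1.
  by exists [::]; rewrite big_nil.
rewrite poly_sv (bigD1 i) //= eqxx big1 ?addr0 // => j /negbTE ->.
by rewrite mulr0.
Qed.

Lemma coords_list i (l : seq {mpoly R[n]}) : all (fun h => deg_le h (d i)) l ->
  exists F : seq 'cV[R]_(L i), \sum_(h <- l) h ^+ 2 = \sum_(c <- F) hpo i c ^+ 2.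
Proof.
elim: l => [|h l IH]; first by exists [::]; rewrite !big_nil.
move=> /andP [hh hl]; have [F EF] := IH hl.
case: (hp i) => _ _ hspan; have [c Ec] := hspan h hh.
exists (\col_j c j :: F); rewrite !big_cons EF; congr (_ ^+ 2 + _).
by rewrite Ec /hpo; apply eq_bigr => j _; rewrite mxE.
Qed.

Lemma sigma_decomp s : SigmaC g d q s ->
  exists F : forall i, seq 'cV[R]_(L i), s = \sum_i \sum_(c <- F i) sv i c.
Proof.
case=> sig [hsig Es].
have : forall i, exists F : seq 'cV[R]_(L i), sig i = \sum_(c <- F) hpo i c ^+ 2.
  move=> i; have [l [hl El]] := hsig i.
  by have [F EF] := @coords_list i l hl; exists F; rewrite El EF.
case/fin_all_exists => F HF; exists F.
apply: poly_inj; rewrite Es poly_of_sum; apply eq_bigr => i _.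
rewrite poly_of_sum HF mulr_sumr; apply eq_bigr => c _.
by rewrite poly_sv.
Qed.

Lemma dotU_sum (y : 'cV[R]_U) (I : Type) (r : seq I) (F : I -> 'cV[R]_U) :
  dotU y (\sum_(k <- r) F k) = \sum_(k <- r) dotU y (F k).
Proof.
rewrite /dotU exchange_big /=; apply eq_bigr => u _.
by rewrite summxE mulr_sumr.
Qed.

Lemma dual_of_blocks y : (forall i c, 0 <= qf (LamI Lam i y) c) -> dual_cone (SigmaC g d q) y.
Proof.
move=> H s /sigma_decomp [F ->]; rewrite dotU_sum; apply sumr_ge0 => i _.
by rewrite dotU_sum; apply sumr_ge0 => c _; rewrite dot_sv.
Qed.

Lemma perp_of_blocks y : (forall i, LamI Lam i y = 0) -> forall s, SigmaC g d q s -> dotU y s = 0.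
Proof.
move=> H s /sigma_decomp [F ->]; rewrite dotU_sum; apply big1 => i _.
by rewrite dotU_sum; apply big1 => c _; rewrite dot_sv H /qf mulmx0 mul0mx mxE.
Qed.

Lemma dotUDr (a b c : 'cV[R]_U) : dotU a (b + c) = dotU a b + dotU a c.
Proof. by rewrite /dotU -big_split; apply eq_bigr => u _; rewrite mxE mulrDr. Qed.
Lemma dotUZr (a b : 'cV[R]_U) k : dotU a (k *: b) = k * dotU a b.
Proof. by rewrite /dotU mulr_sumr; apply eq_bigr => u _; rewrite mxE; ring. Qed.
Lemma dotUZl (a b : 'cV[R]_U) k : dotU (k *: a) b = k * dotU a b.
Proof. by rewrite dotUC dotUZr dotUC. Qed.
Lemma dotUDl (a b c : 'cV[R]_U) : dotU (b + c) a = dotU b a + dotU c a.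
Proof. by rewrite dotUC dotUDr !(dotUC a). Qed.
Lemma dotU0r (a : 'cV[R]_U) : dotU a 0 = 0.
Proof. by rewrite /dotU big1 // => u _; rewrite mxE mulr0. Qed.
Lemma dotU_delta (w : 'cV[R]_U) u : dotU w (delta R u) = w u 0.
Proof.
rewrite /dotU (bigD1 u) //= mxE eqxx mulr1 big1 ?addr0 // => v vu.
by rewrite mxE eq_sym (negbTE vu) mulr0.
Qed.
Lemma dist2E (x s : 'cV[R]_U) : dist2 (x + s) x = dotU s s.
Proof. by rewrite /dist2 /dotU; apply eq_bigr => u _; rewrite mxE expr2; ring. Qed.

Lemma dotU_ge0 (s : 'cV[R]_U) : 0 <= dotU s s.
Proof. by rewrite /dotU; apply sumr_ge0 => u _; rewrite -expr2 sqr_ge0. Qed.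

Lemma dotU_gt0 (s : 'cV[R]_U) : s != 0 -> 0 < dotU s s.
Proof.
move=> s0; rewrite lt_def dotU_ge0 andbT; apply/negP => /eqP H; move/negP: s0; apply.
apply/eqP; apply: tr_sq_eq0; rewrite -H tr_sq /dotU; apply eq_bigr => u _.
by rewrite big_ord1 expr2.
Qed.

Lemma realC (e S : R) : 0 < e -> 0 < S -> (e / (S + 1)) ^+ 2 * S < e ^+ 2.
Proof.
move=> e0 S0; set k := e / (S + 1).
have S1 : S + 1 != 0 by rewrite gt_eqF // addr_gt0.
have Ek : e = k * (S + 1) by rewrite /k divfK.
have k0 : 0 < k by rewrite /k divr_gt0 // addr_gt0.
rewrite Ek; have k2 : 0 < k ^+ 2 by rewrite exprn_gt0.
have : 0 < k ^+ 2 * (S ^+ 2 + S + 1).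
  by apply mulr_gt0 => //; rewrite addr_gt0 // addr_gt0 // exprn_gt0.
move=> H; rewrite -subr_gt0; apply: lt_le_trans H _; rewrite le_eqVlt; apply/orP; left.
by apply/eqP; ring.
Qed.

Lemma interior_pd x : interior (dual_cone (SigmaC g d q)) x ->
  forall i c, c != 0 -> 0 < qf (LamI Lam i x) c.
Proof.
move=> [e e0 He] i c c0.
set s := sv i c.
have s0 : s != 0.
  apply/negP => /eqP s0; move/negP: c0; apply; apply/eqP/(hpo_inj).
  have := poly_sv i c; rewrite -/s s0 poly_of0 => /esym /eqP.
  by rewrite mulf_eq0 (negbTE (hg i)) /= expf_eq0 /= => /eqP.
set S := dotU s s; have S0 : 0 < S by apply dotU_gt0.
set eps := e / (S + 1).
have eps0 : 0 < eps by rewrite divr_gt0 // addr_gt0.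
have := He (x + (- eps) *: s).
rewrite dist2E dotUZl dotUZr -/S mulrA -expr2 sqrrN => /(_ (realC e S e0 S0)) /(_ s (sv_in i c)).
rewrite dotUDl dotUZl -/S dot_sv => H.
have : 0 < eps * S by rewrite mulr_gt0.
move=> H2; apply: lt_le_trans H2 _; rewrite -subr_ge0.
by move: H; rewrite mulNr.
Qed.

Lemma interior_psd x : interior (dual_cone (SigmaC g d q)) x ->
  forall i c, 0 <= qf (LamI Lam i x) c.
Proof.
move=> hx i c; have [->|c0] := eqVneq c 0.
  by rewrite /qf mulmx0 mxE.
by apply ltW; apply interior_pd.
Qed.

Lemma pd_LamB x : interior (dual_cone (SigmaC g d q)) x -> pdmx (LamB Lam x).
Proof.
move=> hx v v0; rewrite /LamB qf_mxdiag.
case: (pickP (fun i => submxcol v i != 0)) => [i Hi | H]; last first.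
  move/negP: v0; case; apply/eqP/submxcol_eq0 => i.
  by have := H i; move/negbT; rewrite negbK => /eqP.
rewrite (bigD1 i) //=; apply: (lt_le_trans (interior_pd x hx i _ Hi)).
by rewrite lerDl; apply sumr_ge0 => j _; apply interior_psd.
Qed.

Lemma dist2_0 (z : 'cV[R]_U) : dist2 z z = 0.
Proof. by rewrite /dist2 big1 // => u _; rewrite subrr expr0n. Qed.

Lemma interior_in (K : 'cV[R]_U -> Prop) z : interior K z -> K z.
Proof. by case=> e e0 H; apply H; rewrite dist2_0 exprn_gt0. Qed.

Lemma perp_zero w : (forall s, SigmaC g d q s -> dotU w s = 0) -> w = 0.
Proof.
move=> H; case: hcone => _ _ _ [t0 [e0 e00 He0]].
apply/matrixP => u k; rewrite (ord1 k) mxE.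
have h1 : SigmaC g d q t0 by apply He0; rewrite dist2_0 exprn_gt0.
have h2 : SigmaC g d q (t0 + (e0 / 2) *: delta R u).
  apply He0; rewrite dist2E dotUZl dotUZr dotU_delta mxE eqxx mulr1 -expr2.
  have : e0 / 2 < e0 by rewrite ltr_pdivrMr // ltr_pMr // ltr1n.
  move=> h; rewrite ltrXn2r //; by rewrite divr_ge0 // ltW.
have := H _ h2; rewrite dotUDr (H _ h1) add0r dotUZr dotU_delta => /eqP.
have he : e0 / 2 != 0 by rewrite gt_eqF // divr_gt0.
by rewrite mulf_eq0 (negbTE he) /= => /eqP.
Qed.

Lemma hess_unit x : interior (dual_cone (SigmaC g d q)) x -> hess Lam x \in unitmx.
Proof.
move=> hx; rewrite unitmxE unitfE -det_tr; apply/negP => /det0P [v v0 vH].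
set w := v^T.
have Hw : hess Lam x *m w = 0 by rewrite /w -(trmxK (hess Lam x)) -trmx_mul vH trmx0.
have E := dot_hess x w w; rewrite Hw dotU0r in E.
have [_ E2] := ip_ge0_eq0 (symLamB x) (pd_LamB x hx) (symLamB w).
have W0 := E2 (esym E).
have Hb : forall i, LamI Lam i w = 0.
  move=> i; rewrite -(@submxblock_diag _ _ _ (fun i => LamI Lam i w) i).
  by rewrite -/(LamB Lam w) W0; apply/matrixP => a b; rewrite !mxE.
have := perp_zero w (perp_of_blocks w Hb).
by move/eqP; rewrite /w trmx_eq0 (negbTE v0).
Qed.

Lemma psd_to_dual y : psdmx (LamB Lam y) -> dual_cone (SigmaC g d q) y.
Proof.
move=> H; apply dual_of_blocks => i c.
by have := H (embed c); rewrite /LamB qf_embed.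
Qed.

Lemma Hy_E x (y : 'cV[R]_U) : interior (dual_cone (SigmaC g d q)) x ->
  hess Lam x *m (invmx (hess Lam x) *m y) = y.
Proof. by move=> hx; rewrite mulKVmx // hess_unit. Qed.

Lemma part1 t x : interior (SigmaC g d q) t -> interior (dual_cone (SigmaC g d q)) x ->
  0 <= (t^T *m (x *m x^T - ((\sum_(i < m) L i)%:R - 1) *: invmx (hess Lam x)) *m t) 0 0 ->
  dual_cone (SigmaC g d q) (invmx (hess Lam x) *m t).
Proof.
move=> ht hx Hin.
set y := invmx (hess Lam x) *m t.
have Et : hess Lam x *m y = t by apply Hy_E.
have Ea : \tr (LamB Lam y *m invmx (LamB Lam x)) = dotU x t.
  by rewrite -(ipX (pd_LamB x hx)) -dot_hess Et.
have Eb : ip (LamB Lam x) (LamB Lam y) (LamB Lam y) = dotU t y.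
  by rewrite -dot_hess Et dotUC.
apply psd_to_dual; apply: (keyB (symLamB x) (pd_LamB x hx) (symLamB y)).
  by rewrite Ea; apply (interior_in _ _ hx); apply interior_in.
rewrite Ea Eb.
move: Hin; rewrite mulmxBr mulmxBl -scalemxAr -scalemxAl.
have EE : forall (A B : 'M[R]_1) k, (A - k *: B) 0 0 = A 0 0 - k * B 0 0.
  by move=> A B k; rewrite !mxE.
have E1 : (t^T *m invmx (hess Lam x) *m t) 0 0 = dotU t y by rewrite dotUE /y mulmxA.
have E2 : (t^T *m (x *m x^T) *m t) 0 0 = dotU x t ^+ 2.
  rewrite mulmxA -(mulmxA (t^T *m x)) mul11 expr2 -dotUE (dotUC t x); congr (_ * _).
  by rewrite dotUE.
by rewrite EE E1 E2 subr_ge0.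
Qed.

Lemma part2 x t : interior (dual_cone (SigmaC g d q)) x ->
  dual_norm Lam x (t - (- grad Lam x)) <= 1 ->
  dual_cone (SigmaC g d q) (invmx (hess Lam x) *m t).
Proof.
move=> hx Hn.
set y := invmx (hess Lam x) *m t.
have Et : hess Lam x *m y = t by apply Hy_E.
have Xu : LamB Lam x \in unitmx by apply pd_unit; apply pd_LamB.
have Eg : - grad Lam x = hess Lam x *m x.
  by rewrite /grad opprK hessE mulVmx // mul1mx.
have Edl : t - - grad Lam x = hess Lam x *m (y - x) by rewrite Eg -Et mulmxBr.
move: Hn; rewrite /dual_norm Edl -mulmxA mulKmx ?hess_unit // -dotUE dotUC dot_hess LamB_B.
set D := LamB Lam y - LamB Lam x => Hn.
have sD : D^T = D by rewrite /D linearB /= !symLamB.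
have [D0 _] := ip_ge0_eq0 (symLamB x) (pd_LamB x hx) sD.
have HD : ip (LamB Lam x) D D <= 1.
  rewrite -(sqr_sqrtr D0) -(expr1n _ 2); apply: lerXn2r => //.
  - by rewrite nnegrE sqrtr_ge0.
  - by rewrite nnegrE ler01.
have := keyA (symLamB x) (pd_LamB x hx) sD HD.
rewrite /D addrC subrK => H.
by apply psd_to_dual.
Qed.


Lemma lemma2_sec :
  (forall (t x : 'cV[R]_U),
      interior (SigmaC g d q) t ->
      interior (dual_cone (SigmaC g d q)) x ->
      0 <= (t^T *m (x *m x^T - ((\sum_(i < m) L i)%:R - 1) *: invmx (hess Lam x)) *m t) 0 0 ->
      certC g d q Lam t x /\ primP g d q Lam x t)
  /\
  (forall (x t : 'cV[R]_U),
      interior (dual_cone (SigmaC g d q)) x ->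
      dual_norm Lam x (t - (- grad Lam x)) <= 1 ->
      dual_cone (SigmaC g d q) (invmx (hess Lam x) *m t)).
Proof.
split.
  move=> t x ht hx Hin; have H := part1 t x ht hx Hin.
  by split; split => //; apply interior_in.
by move=> x t hx Hn; apply part2.
Qed.

End Main.

Theorem lemma2 (R : rcfType) (n m U : nat)
  (g : 'I_m -> {mpoly R[n]}) (d : 'I_m -> nat) (q : 'I_U -> {mpoly R[n]})
  (L : 'I_m -> nat) (p : forall i : 'I_m, 'I_(L i) -> {mpoly R[n]})
  (Lam : forall i : 'I_m, 'I_U -> 'M[R]_(L i)) :
  (forall i, g i != 0) ->
  is_basis_V g d q ->
  (forall i, is_basis_deg (d i) (p i)) ->
  (forall i (j k : 'I_(L i)),
      \sum_(u < U) (Lam i u) j k *: q u = g i * (p i j * p i k)) ->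
  proper_cone (SigmaC g d q) ->
  (forall (t x : 'cV[R]_U),
      interior (SigmaC g d q) t ->
      interior (dual_cone (SigmaC g d q)) x ->
      0 <= (t^T *m (x *m x^T - ((\sum_(i < m) L i)%:R - 1) *: invmx (hess Lam x)) *m t) 0 0 ->
      certC g d q Lam t x /\ primP g d q Lam x t)
  /\
  (forall (x t : 'cV[R]_U),
      interior (dual_cone (SigmaC g d q)) x ->
      dual_norm Lam x (t - (- grad Lam x)) <= 1 ->
      dual_cone (SigmaC g d q) (invmx (hess Lam x) *m t)).
Proof.
move=> hg hq hp hLam hcone.
exact: (@lemma2_sec R n m U g d q L p Lam hg hq hp hLam hcone).
Qed.
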